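(* Let $(X,\tau)$ be a fuzzifying topological space and let $\varphi_P\in\Im(P(X))$ be a pre-subbase of $\tau_P$. Then $\Gamma_P(X,\tau)=[\beta_i]$ for each $i=1,\dots,5$, where $[\beta_1]=\inf_{\Re\in\Im(P(X))}\min\big(1,1-\max(0,K(\Re,X)+[\Re\subseteq\varphi_P]-1)+\sup_{\wp\le\Re}\max(0,K(\wp,X)+FF(\wp)-1)\big)$; $[\beta_2]=\inf\{\sup_{x\in X}[S\rhd^P x]: S \text{ a universal net in } X\}$; $[\beta_3]=\inf_{S\in N(X)}\sup_{x\in X}\sup_{T<S}[T\rhd^Px]$; $[\beta_4]=\inf_{S\in N(X)}\sup_{x\in X}[S\propto^Px]$; $[\beta_5]=\inf_{\Re\in\Im(P(X))}\min\big(1,1-\max(0,[\Re\subseteq F_P]+fI(\Re)-1)+\sup_{x\in X}\inf_{A:\,x\notin A}(1-\Re(A))\big)$.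
   Context: $\Im(Y)$: fuzzy subsets $Y\to[0,1]$; $P(X)$: power set. A fuzzifying topology on $X$ is $\tau\in\Im(P(X))$ with $\tau(X)=1$, $\tau(A\cap B)\ge\min(\tau(A),\tau(B))$, $\tau(\bigcup A_\lambda)\ge\inf\tau(A_\lambda)$. $N_x(A)=\sup_{x\in B\subseteq A}\tau(B)$; $Cl(A)(x)=1-N_x(X\setminus A)$; for $\mu\in\Im(X)$, $Int(\mu)(x)=\sup_{x\in B\subseteq X}\min(\tau(B),\inf_{y\in B}\mu(y))$. Pre-open degrees $\tau_P(A)=\inf_{x\in A}Int(Cl(A))(x)$; pre-closed $F_P(A)=\tau_P(X\setminus A)$; pre-neighbourhoods $N^P_x(A)=\sup_{x\in B\subseteq A}\tau_P(B)$. Pre-base: $\beta\in\Im(P(X))$ with $\beta\le\tau_P$ and $N^P_x(A)\le\sup_{x\in B\subseteq A}\beta(B)$ for all $x,A$. Pre-subbase: $\varphi_P$ such that $\varphi_P^{\Cap}$ is a pre-base, where $\varphi_P^{\Cap}(A)=\sup\{\min_i\varphi_P(B_i):B_1,\dots,B_n\subseteq X \text{ finitely many},\ \bigcap_iB_i=A\}$. For $\Re,\wp,\rho\in\Im(P(X))$: $K(\Re,X)=\inf_{x\in X}\sup_{B\ni x}\Re(B)$; $[\Re\subseteq\rho]=\inf_{B}\min(1,1-\Re(B)+\rho(B))$; $\wp\le\Re$ means $\wp(B)\le\Re(B)$ for all $B$; $FF(\wp)=1-\inf\{\delta\in[0,1]:\{B:\wp(B)>\delta\}\text{ is finite}\}$.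 The degree of fuzzifying strong compactness is $\Gamma_P(X,\tau)=\inf_{\Re}\min\big(1,1-\max(0,K(\Re,X)+[\Re\subseteq\tau_P]-1)+\sup_{\wp\le\Re}\max(0,K(\wp,X)+FF(\wp)-1)\big)$. The fuzzy finite intersection property is $fI(\Re)=\inf_{\wp\le\Re}\min\big(1,1-FF(\wp)+\sup_{x\in X}\inf_{B:\,x\notin B}(1-\wp(B))\big)$. Nets: $N(X)$ is the class of nets in $X$; a net $S$ is almost in $A$ if it is eventually in $A$, and often in $A$ if it is frequently in $A$; $S$ is universal if for every $A\subseteq X$ it is eventually in $A$ or eventually in $X\setminus A$; $T<S$ means $T$ is a subnet of $S$. $[S\rhd^Px]=\inf\{1-N^P_x(A): S\text{ not almost in }A\}$ and $[S\propto^Px]=\inf\{1-N^P_x(A):S\text{ not often in }A\}$. *)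

(* Defs.v *)
From HB Require Import structures.
From mathcomp Require Import all_boot all_order all_algebra.
From mathcomp Require Import all_classical all_reals.
Set Implicit Arguments.
Unset Strict Implicit.
Unset Printing Implicit Defensive.
Import Order.TTheory GRing.Theory Num.Theory.
Local Open Scope classical_set_scope.
Local Open Scope ring_scope.

Section Fuzzy.
Variable R : realType.

(* Supremum / infimum of a set of degrees in [0,1], with the fuzzy-logic
   conventions sup of the empty set = 0 and inf of the empty set = 1. *)
Definition Sup01 (S : set R) : R := sup (S `|` [set 0]).
Definition Inf01 (S : set R) : R := 1 - Sup01 [set 1 - r | r in S].

Variable X : Type.

Definition fuzzy {Y : Type} (mu : Y -> R) : Prop := forall y, 0 <= mu y <= 1.

Definition fuzzifying_topology (tau : set X -> R) : Prop :=
  fuzzy tau /\ tau setT = 1 /\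
  (forall A B, Num.min (tau A) (tau B) <= tau (A `&` B)) /\
  (forall F : set (set X), Inf01 [set tau A | A in F] <= tau (\bigcup_(A in F) A)).

Definition nbhd (tau : set X -> R) (x : X) (A : set X) : R :=
  Sup01 [set tau B | B in [set B | B x /\ B `<=` A]].

Definition fclosure (tau : set X -> R) (A : set X) : X -> R :=
  fun x => 1 - nbhd tau x (~` A).

Definition finterior (tau : set X -> R) (mu : X -> R) : X -> R :=
  fun x => Sup01 [set Num.min (tau B) (Inf01 [set mu y | y in B]) | B in [set B | B x]].

Definition preopen (tau : set X -> R) (A : set X) : R :=
  Inf01 [set finterior tau (fclosure tau A) x | x in A].

Definition preclosed (tau : set X -> R) (A : set X) : R := preopen tau (~` A).

Definition prenbhd (tau : set X -> R) (x : X) (A : set X) : R :=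
  Sup01 [set preopen tau B | B in [set B | B x /\ B `<=` A]].

Definition pre_base (tau : set X -> R) (beta : set X -> R) : Prop :=
  fuzzy beta /\ (forall B, beta B <= preopen tau B) /\
  (forall x A, prenbhd tau x A <= Sup01 [set beta B | B in [set B | B x /\ B `<=` A]]).

Definition fin_inter (phi : set X -> R) (A : set X) : R :=
  Sup01 [set r | exists (n : nat) (B : 'I_n.+1 -> set X),
           (\bigcap_(i in setT) B i) = A /\
           r = \big[Num.min/1]_(i < n.+1) phi (B i)].

Definition pre_subbase (tau : set X -> R) (phi : set X -> R) : Prop :=
  fuzzy phi /\ pre_base tau (fin_inter phi).

Definition Kdeg (Re : set X -> R) : R :=
  Inf01 [set Sup01 [set Re B | B in [set B | B x]] | x in setT].

Definition fincl (Re rho : set X -> R) : R :=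
  Inf01 [set Num.min 1 (1 - Re B + rho B) | B in setT].

Definition fle (P Re : set X -> R) : Prop := forall B, P B <= Re B.

Definition FF (P : set X -> R) : R :=
  1 - Inf01 [set d | 0 <= d <= 1 /\ finite_set [set B | d < P B]].

Definition compact_term (rho : set X -> R) (Re : set X -> R) : R :=
  Num.min 1 (1 - Num.max 0 (Kdeg Re + fincl Re rho - 1) +
    Sup01 [set Num.max 0 (Kdeg P + FF P - 1)
            | P in [set P | fuzzy P /\ fle P Re]]).

(* degree of fuzzifying strong compactness, parametrised by the family
   of "open" degrees used in [Re \subseteq .] *)
Definition Gamma_rho (rho : set X -> R) : R :=
  Inf01 [set compact_term rho Re | Re in [set Re | fuzzy Re]].

Definition GammaP (tau : set X -> R) : R := Gamma_rho (preopen tau).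

Definition fI (Re : set X -> R) : R :=
  Inf01 [set Num.min 1 (1 - FF P +
      Sup01 [set Inf01 [set 1 - P B | B in [set B | ~ B x]] | x in setT])
    | P in [set P | fuzzy P /\ fle P Re]].

Record Net := {
  ndom : Type;
  nle : ndom -> ndom -> Prop;
  nle_refl : forall a, nle a a;
  nle_trans : forall a b c, nle a b -> nle b c -> nle a c;
  ndirected : forall a b, exists c, nle a c /\ nle b c;
  ninhabited : inhabited ndom;
  nmap : ndom -> X }.

Definition eventually_in (S : Net) (A : set X) : Prop :=
  exists d0 : ndom S, forall d, nle d0 d -> A (nmap d).

Definition frequently_in (S : Net) (A : set X) : Prop :=
  forall d0 : ndom S, exists d, nle d0 d /\ A (nmap d).

Definition universal_net (S : Net) : Prop :=
  forall A : set X, eventually_in S A \/ eventually_in S (~` A).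

(* T is a subnet of S (Kelley) *)
Definition subnet (T S : Net) : Prop :=
  exists h : ndom T -> ndom S,
    (forall e : ndom T, nmap e = nmap (h e)) /\
    (forall m : ndom S, exists n : ndom T, forall p, nle n p -> nle m (h p)).

Definition preconv (tau : set X -> R) (S : Net) (x : X) : R :=
  Inf01 [set 1 - prenbhd tau x A | A in [set A | ~ eventually_in S A]].

Definition preaccum (tau : set X -> R) (S : Net) (x : X) : R :=
  Inf01 [set 1 - prenbhd tau x A | A in [set A | ~ frequently_in S A]].

Definition beta1 (phi : set X -> R) : R := Gamma_rho phi.

Definition beta2 (tau : set X -> R) : R :=
  Inf01 [set Sup01 [set preconv tau S x | x in setT]
         | S in [set S | universal_net S]].

Definition beta3 (tau : set X -> R) : R :=
  Inf01 [set Sup01 [set Sup01 [set preconv tau T x | T in [set T | subnet T S]]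
                   | x in setT]
         | S in setT].

Definition beta4 (tau : set X -> R) : R :=
  Inf01 [set Sup01 [set preaccum tau S x | x in setT] | S in setT].

Definition beta5 (tau : set X -> R) : R :=
  Inf01 [set Num.min 1 (1 - Num.max 0 (fincl Re (preclosed tau) + fI Re - 1) +
            Sup01 [set Inf01 [set 1 - Re A | A in [set A | ~ A x]] | x in setT])
         | Re in [set Re | fuzzy Re]].

End Fuzzy.

(* Main.v *)
Require Import Defs.
From HB Require Import structures.
From mathcomp Require Import all_boot all_order all_algebra.
From mathcomp Require Import all_classical all_reals.
From mathcomp Require Import lra.
Import Order.TTheory GRing.Theory Num.Theory.
Local Open Scope classical_set_scope.
Local Open Scope ring_scope.

Section Basics.
Variable R : realType.
Implicit Types (S : set R) (c r : R).

Lemma Sup01_ge0 S : 0 <= Sup01 S.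
Proof.
rewrite /Sup01; have [hs|hs] := pselect (has_sup (S `|` [set 0])).
  by apply: (ub_le_sup hs.2); right.
by rewrite sup_out.
Qed.

Lemma Sup01_ub S r : (forall y, S y -> y <= 1) -> S r -> r <= Sup01 S.
Proof.
move=> hb hr; rewrite /Sup01; apply: ub_le_sup; last by left.
exists 1 => y [/hb //|->]; exact: ler01.
Qed.

Lemma Sup01_le S c : 0 <= c -> (forall y, S y -> y <= c) -> Sup01 S <= c.
Proof.
move=> c0 hc; rewrite /Sup01; apply: ge_sup; first by exists 0; right.
by move=> y [/hc //|->].
Qed.

Lemma Sup01_gt S c : 0 <= c -> c < Sup01 S -> exists2 y, S y & c < y.
Proof.
move=> c0 hc; have [|y [Sy|->] cy] := sup_gt _ hc; first by exists 0; right.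
  by exists y.
by move: (le_lt_trans c0 cy); rewrite ltxx.
Qed.

Lemma Sup01_le1 S : (forall y, S y -> y <= 1) -> Sup01 S <= 1.
Proof. by move=> h; apply: Sup01_le => //; exact: ler01. Qed.

Lemma Inf01_le1 S : Inf01 S <= 1.
Proof. rewrite /Inf01; have := Sup01_ge0 [set 1 - r | r in S]; lra. Qed.

Lemma Inf01_ge0 S : (forall y, S y -> 0 <= y) -> 0 <= Inf01 S.
Proof.
move=> h; rewrite /Inf01 subr_ge0; apply: Sup01_le1 => _ [y /h Sy <-]; lra.
Qed.

Lemma Inf01_lb S r : (forall y, S y -> 0 <= y) -> S r -> Inf01 S <= r.
Proof.
move=> h Sr; rewrite /Inf01.
have : 1 - r <= Sup01 [set 1 - r | r in S].
  by apply: Sup01_ub; [move=> _ [y /h Sy <-]; lra|exists r].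
lra.
Qed.

Lemma Inf01_ge S c : c <= 1 -> (forall y, S y -> c <= y) -> c <= Inf01 S.
Proof.
move=> c1 h; rewrite /Inf01.
have : Sup01 [set 1 - r | r in S] <= 1 - c.
  by apply: Sup01_le; [lra|move=> _ [y /h Sy <-]; lra].
lra.
Qed.

Lemma Inf01_lt S c : c <= 1 -> Inf01 S < c -> exists2 y, S y & y < c.
Proof.
move=> c1; rewrite /Inf01 => h.
have h0 : 0 <= 1 - c by lra.
have h1 : 1 - c < Sup01 [set 1 - r | r in S] by lra.
have [_ [y Sy <-] hy] := @Sup01_gt _ (1 - c) h0 h1.
exists y => //; lra.
Qed.

Lemma one_minus_Inf01 S : 1 - Inf01 S = Sup01 [set 1 - r | r in S].
Proof. rewrite /Inf01; lra. Qed.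

End Basics.

Section Nets.
Variable X : Type.
Implicit Types (S T : Net X) (A B : set X).

Lemma ev_T S : eventually_in S setT.
Proof. by case: (ninhabited S) => d; exists d. Qed.

Lemma ev_S {S A B} : A `<=` B -> eventually_in S A -> eventually_in S B.
Proof. by move=> AB [d hd]; exists d => e /hd /AB. Qed.

Lemma ev_I {S A B} : eventually_in S A -> eventually_in S B ->
  eventually_in S (A `&` B).
Proof.
move=> [d1 h1] [d2 h2]; have [c [c1 c2]] := ndirected d1 d2.
exists c => e ce; split; [apply: h1|apply: h2]; exact: nle_trans ce.
Qed.

Lemma ev_nonempty {S A} : eventually_in S A -> exists x, A x.
Proof. by move=> [d hd]; exists (nmap d); apply: hd; apply: nle_refl. Qed.

Lemma ev_notfreq S A : eventually_in S (~` A) -> ~ frequently_in S A.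
Proof.
move=> [d1 h1] hf; have [e [de Ae]] := hf d1.
exact: (h1 e de).
Qed.

Lemma notfreq_ev {S A} : ~ frequently_in S A -> eventually_in S (~` A).
Proof.
move=> hf; apply: contrapT => hn; apply: hf => d0.
apply: contrapT => hne; apply: hn; exists d0 => d hd Ad.
by apply: hne; exists d.
Qed.

Lemma ev_notev {S A} : eventually_in S (~` A) -> ~ eventually_in S A.
Proof.
move=> h1 h2; by have [x []] := ev_nonempty (ev_I h1 h2).
Qed.

Lemma ev_fin S (F : set (set X)) : finite_set F ->
  (forall B, F B -> eventually_in S B) ->
  eventually_in S (fun x => forall B, F B -> B x).
Proof.
move=> /finite_seqP [s ->]; elim: s => [|a s IH] h.
  by apply: ev_S (ev_T S) => x _ B /=; rewrite in_nil.
have ha : eventually_in S a by apply: h => /=; rewrite in_cons eqxx.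
have hs : eventually_in S (fun x => forall B, [set` s] B -> B x).
  by apply: IH => B /= Bs; apply: h => /=; rewrite in_cons Bs orbT.
apply: ev_S (ev_I ha hs) => x [ax sx] B /=; rewrite in_cons => /orP [/eqP -> //|].
exact: sx.
Qed.

Lemma ev_ord S n (B : 'I_n -> set X) : (forall i, eventually_in S (B i)) ->
  eventually_in S (\bigcap_(i in setT) B i).
Proof.
move=> h; have := @ev_fin S (range B) (finite_image _ (finite_finset)).
move=> /(_ _) hr; apply: ev_S (hr _) => [x hx i _|_ [i _ <-] //].
by apply: hx; exists i.
Qed.

Lemma subnet_ev {T S A} : subnet T S -> eventually_in S A -> eventually_in T A.
Proof.
move=> [h [hm hc]] [d hd]; have [n hn] := hc d.
by exists n => p /hn /hd; rewrite hm.
Qed.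

Lemma subnet_notev T S A : subnet T S -> ~ frequently_in S A -> ~ eventually_in T A.
Proof. by move=> hs /notfreq_ev /(subnet_ev hs) /ev_notev. Qed.

Lemma universal_subnet S : exists T, subnet T S /\ universal_net T.
Proof.
set F := [set A | eventually_in S A].
have FF : ProperFilter F.
  apply: Build_ProperFilter_ex; first by move=> A /ev_nonempty.
  split; first exact: ev_T.
  - by move=> A B; apply: ev_I.
  - by move=> A B AB; apply: ev_S.
have [U [UU FU]] := ultraFilterLemma FF.
have Ufreq : forall A, U A -> frequently_in S A.
  move=> A UA; apply: contrapT => /notfreq_ev /FU UnA.
  have /filter_ex [x []] : U (A `&` ~` A) by exact: filterI.
  by [].
pose D : Type := {p : ndom S * (X -> Prop) | U p.2 /\ p.2 (nmap p.1)}.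
pose le (p q : D) := nle (sval p).1 (sval q).1 /\ (sval q).2 `<=` (sval p).2.
have le_refl : forall p, le p p by move=> p; split => //; exact: nle_refl.
have le_trans : forall p q r, le p q -> le q r -> le p r.
  move=> p q r [pq1 pq2] [qr1 qr2]; split; first exact: nle_trans qr1.
  exact: subset_trans pq2.
have le_dir : forall p q, exists r, le p r /\ le q r.
  move=> [[d1 A1] [U1 h1]] [[d2 A2] [U2 h2]].
  have [c [c1 c2]] := ndirected d1 d2.
  have UA : U (A1 `&` A2) by exact: filterI.
  have [e [ce Ae]] := Ufreq _ UA c.
  exists (exist _ (e, A1 `&` A2) (conj UA Ae)); split; split => /=.
  - exact: nle_trans ce.
  - by move=> x [].
  - exact: nle_trans ce.
  - by move=> x [].
have Ut : U setT by apply: filterT.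
have Dinh : inhabited D.
  case: (ninhabited S) => d0; constructor.
  exact: (exist _ (d0, setT) (conj Ut I)).
pose T := Build_Net le_refl le_trans le_dir Dinh (fun p => nmap (sval p).1).
exists T; split.
  exists (fun p : D => (sval p).1); split => // m.
  by exists (exist _ (m, setT) (conj Ut I)) => p [].
move=> A.
have key : forall B, U B -> eventually_in T B.
  move=> B UB; case: (ninhabited S) => d0.
  have [e [_ Be]] := Ufreq _ UB d0.
  exists (exist _ (e, B) (conj UB Be)) => p [_ /= h].
  case: p h => [[d C] [UC Cd]] /= h; exact: h.
by case: (in_ultra_setVsetC A UU) => h; [left|right]; apply: key.
Qed.

Lemma cover_net (P : set (set X)) :
  (forall F : set (set X), finite_set F -> F `<=` P -> exists x, forall B, F B -> ~ B x) ->
  exists S : Net X, forall B, P B -> eventually_in S (~` B).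
Proof.
move=> Hc.
pose D : Type := {F : (X -> Prop) -> Prop | finite_set F /\ F `<=` P}.
pose le (p q : D) := sval p `<=` sval q.
have le_refl : forall p, le p p by move=> p.
have le_trans : forall p q r, le p q -> le q r -> le p r.
  by move=> p q r pq qr; exact: subset_trans qr.
have le_dir : forall p q, exists r, le p r /\ le q r.
  move=> [F1 [f1 s1]] [F2 [f2 s2]].
  have hU : finite_set (F1 `|` F2) /\ (F1 `|` F2) `<=` P.
    by split; [rewrite finite_setU|move=> B [/s1|/s2]].
  by exists (exist _ (F1 `|` F2) hU); split => B hB /=; [left|right].
have Dinh : inhabited D.
  constructor; exists set0; split; [exact: finite_set0|by []].
pose f (p : D) := projT1 (cid (Hc (sval p) (proj1 (svalP p)) (proj2 (svalP p)))).
have hf : forall p B, sval p B -> ~ B (f p).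
  move=> p B; rewrite /f; case: cid => x hx /=; exact: hx.
exists (Build_Net le_refl le_trans le_dir Dinh f) => B PB.
have h1 : finite_set [set B] /\ [set B] `<=` P by split; [exact: finite_set1|move=> C ->].
exists (exist _ [set B] h1) => q hq; apply: hf; exact: hq.
Qed.

End Nets.

Section Fz.
Variable R : realType.
Variable X : Type.
Implicit Types (S T : Net X) (A B : set X) (Re P rho tau : set X -> R).

Lemma preopen_ge0 tau A : 0 <= preopen tau A.
Proof. apply: Inf01_ge0 => _ [x _ <-]; exact: Sup01_ge0. Qed.

Lemma preopen_le1 tau A : preopen tau A <= 1.
Proof. exact: Inf01_le1. Qed.

Lemma prenbhd_ge0 tau x A : 0 <= prenbhd tau x A.
Proof. exact: Sup01_ge0. Qed.

Lemma prenbhd_le1 tau x A : prenbhd tau x A <= 1.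
Proof. apply: Sup01_le1 => _ [B _ <-]; exact: preopen_le1. Qed.

Lemma Kdeg_ge0 Re : 0 <= Kdeg Re.
Proof. apply: Inf01_ge0 => _ [x _ <-]; exact: Sup01_ge0. Qed.

Lemma Kdeg_le1 Re : Kdeg Re <= 1.
Proof. exact: Inf01_le1. Qed.

Lemma FF_ge0 P : 0 <= FF P.
Proof.
rewrite /FF; have : Inf01 [set d | 0 <= d <= 1 /\ finite_set [set B | d < P B]] <= 1.
  exact: Inf01_le1.
lra.
Qed.

Lemma FF_le1 P : FF P <= 1.
Proof.
rewrite /FF; have : 0 <= Inf01 [set d | 0 <= d <= 1 /\ finite_set [set B | d < P B]].
  by apply: Inf01_ge0 => d [/andP[]].
lra.
Qed.

Lemma fincl_le1 Re rho : fincl Re rho <= 1.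
Proof. exact: Inf01_le1. Qed.

Lemma sterm_ge0 Re : 0 <= Sup01 [set Num.max 0 (Kdeg P + FF P - 1)
            | P in [set P | fuzzy P /\ fle P Re]].
Proof. exact: Sup01_ge0. Qed.

Lemma compact_term_ge0 rho Re : 0 <= compact_term rho Re.
Proof.
rewrite /compact_term; set s := Sup01 _.
have := sterm_ge0 Re; rewrite -/s => s0.
have := Kdeg_le1 Re; have := fincl_le1 Re rho.
set K := Kdeg Re; set I := fincl Re rho => I1 K1.
rewrite le_min ler01 /=.
case: (lerP 0 (K + I - 1)) => h; lra.
Qed.

Lemma Gamma_le_term rho Re : fuzzy Re -> Gamma_rho rho <= compact_term rho Re.
Proof.
move=> hf; apply: Inf01_lb; last by exists Re.
by move=> _ [Q _ <-]; exact: compact_term_ge0.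
Qed.

Lemma Gamma_ge0 rho : 0 <= Gamma_rho rho.
Proof. by apply: Inf01_ge0 => _ [Q _ <-]; exact: compact_term_ge0. Qed.

Lemma KFF_le P S : (forall B, 0 < P B -> eventually_in S (~` B)) ->
  Kdeg P + FF P <= 1.
Proof.
move=> hP; rewrite /FF.
set D := [set d | _].
suff : Kdeg P <= Inf01 D by lra.
apply: Inf01_ge; first exact: Kdeg_le1.
move=> d [/andP[d0 d1] fin].
have := @ev_fin X S _ (finite_image setC fin).
have hev : forall C, [set ~` B | B in [set B | d < P B]] C -> eventually_in S C.
  move=> _ [B /= hB <-]; apply: hP; exact: le_lt_trans hB.
move=> /(_ hev) [e he].
have {he} hy0 := he e (nle_refl e); set y := nmap e in hy0.
have hy : forall B, d < P B -> ~ B y by move=> B hB; apply: (hy0 (~` B)); exists B.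
apply: (@le_trans _ _ (Sup01 [set P B | B in [set B | B y]])).
  apply: Inf01_lb; last by exists y.
  by move=> _ [x _ <-]; exact: Sup01_ge0.
apply: Sup01_le => // _ [B By <-].
rewrite leNgt; apply/negP => hlt.
exact: (hy B hlt).
Qed.

Lemma gamma_le_net rho S c : (forall B, 0 <= rho B <= 1) -> 0 <= c ->
  (forall x, 1 - c <= Sup01 [set rho B | B in [set B | B x /\ eventually_in S (~` B)]]) ->
  Gamma_rho rho <= c.
Proof.
move=> hr c0 H.
pose Re A := if pselect (eventually_in S (~` A)) then rho A else 0.
have ReF : fuzzy Re.
  move=> A; rewrite /Re; case: pselect => h /=; [exact: hr|by rewrite lexx ler01].
have Rle : forall A, Re A <= rho A.
  by move=> A; rewrite /Re; case: pselect => h /=; [rewrite lexx|case/andP: (hr A)].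
apply: (le_trans (@Gamma_le_term rho Re ReF)).
rewrite /compact_term.
set s := Sup01 _.
have hs : s <= 0.
  apply: Sup01_le; first by rewrite lexx.
  move=> _ [P [Pf PRe] <-]; rewrite ge_max lexx /=.
  suff : Kdeg P + FF P <= 1 by lra.
  apply: (@KFF_le P S) => B hB.
  have : 0 < Re B by exact: lt_le_trans (PRe B).
  by rewrite /Re; case: pselect => h /=; rewrite ?ltxx.
have hI : 1 <= fincl Re rho.
  apply: Inf01_ge; first by rewrite lexx.
  move=> _ [B _ <-]; rewrite le_min lexx /=.
  have := Rle B; lra.
have hK : 1 - c <= Kdeg Re.
  apply: Inf01_ge; first lra.
  move=> _ [x _ <-]; apply: le_trans (H x) _.
  apply: Sup01_le; first exact: Sup01_ge0.
  move=> _ [B [Bx evB] <-].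
  have -> : rho B = Re B by rewrite /Re; case: pselect.
  apply: Sup01_ub; last by exists B.
  by move=> _ [C _ <-]; case/andP: (ReF C).
move: hI hK (fincl_le1 Re rho) (Kdeg_le1 Re).
set K := Kdeg Re; set I := fincl Re rho => hI hK I1 K1.
rewrite ge_min; apply/orP; right.
case: (lerP 0 (K + I - 1)) => h; lra.
Qed.

End Fz.

Section Main.
Variable R : realType.
Variable X : Type.
Implicit Types (S T : Net X) (A B : set X) (Re P rho tau : set X -> R).

Lemma minr_le2 (a b c : R) : b <= c -> Num.min a b <= Num.min a c.
Proof. by move=> h; case: (lerP a b) => h1; case: (lerP a c) => h2; lra. Qed.

Lemma fincl_anti Re rho1 rho2 : fuzzy Re -> (forall B, 0 <= rho1 B) ->
  (forall B, rho1 B <= rho2 B) -> fincl Re rho1 <= fincl Re rho2.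
Proof.
move=> ReF h0 h12; apply: Inf01_ge; first exact: fincl_le1.
move=> _ [B _ <-]; apply: le_trans (_ : Num.min 1 (1 - Re B + rho1 B) <= _).
  apply: Inf01_lb; last by exists B.
  move=> _ [C _ <-]; rewrite le_min ler01 /=.
  have := h0 C; move: (ReF C) => /andP[? ?]; lra.
apply: minr_le2; have := h12 B; lra.
Qed.

Lemma Gamma_anti rho1 rho2 : (forall B, 0 <= rho1 B) ->
  (forall B, rho1 B <= rho2 B) -> Gamma_rho rho2 <= Gamma_rho rho1.
Proof.
move=> h0 h12; apply: Inf01_ge; first exact: Inf01_le1.
move=> _ [Re ReF <-]; apply: le_trans (@Gamma_le_term _ _ rho2 Re ReF) _.
rewrite /compact_term; set s := Sup01 _.
have := @fincl_anti Re rho1 rho2 ReF h0 h12.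
move: (Kdeg Re) (fincl Re rho1) (fincl Re rho2) => K I1 I2 hI.
apply: minr_le2.
case: (lerP 0 (K + I1 - 1)) => h; case: (lerP 0 (K + I2 - 1)) => h'; lra.
Qed.

Lemma phi_le_fin (phi : set X -> R) B : fuzzy phi -> phi B <= fin_inter phi B.
Proof.
move=> pf; rewrite /fin_inter.
have e : \bigcap_(i in [set: 'I_1]) (fun _ => B) i = B.
  by apply/seteqP; split => x; [move/(_ ord0 I)|move=> Bx i _].
apply: le_trans (_ : \big[Num.min/1]_(i < 1) phi ((fun _ => B) i) <= _).
  by apply: le_bigmin => [|i _]; [case/andP: (pf B)|].
apply: Sup01_ub; last by exists 0%N, (fun _ => B).
move=> _ [n [Bs [_ ->]]]; exact: bigmin_le_id.
Qed.

Lemma one_minus_conv tau S x :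
  1 - preconv tau S x = Sup01 [set prenbhd tau x A | A in [set A | ~ eventually_in S A]].
Proof.
rewrite /preconv one_minus_Inf01; congr Sup01.
apply/seteqP; split => y /=.
  by move=> [_ [A hA <-] <-]; exists A => //; lra.
by move=> [A hA <-]; exists (1 - prenbhd tau x A); [exists A|lra].
Qed.

Lemma Gamma_le_univ tau rho S : (forall B, 0 <= rho B <= 1) ->
  (forall x A, ~ eventually_in S A ->
    prenbhd tau x A <= Sup01 [set rho B | B in [set B | B x /\ eventually_in S (~` B)]]) ->
  Gamma_rho rho <= Sup01 [set preconv tau S x | x in setT].
Proof.
move=> hr H; apply: (@gamma_le_net _ _ rho S _ hr (Sup01_ge0 _ _)) => x.
apply: le_trans (_ : 1 - preconv tau S x <= _).
  suff : preconv tau S x <= Sup01 [set preconv tau S x | x in setT] by lra.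
  apply: Sup01_ub; last by exists x.
  by move=> _ [y _ <-]; exact: Inf01_le1.
rewrite one_minus_conv; apply: Sup01_le; first exact: Sup01_ge0.
by move=> _ [A hA <-]; apply: H.
Qed.

Lemma Gamma_le_beta1 tau phi : pre_subbase tau phi ->
  GammaP tau <= beta1 phi.
Proof.
move=> [pf [_ [hle _]]]; apply: Gamma_anti.
  by move=> B; case/andP: (pf B).
by move=> B; apply: le_trans (hle B); apply: phi_le_fin.
Qed.

Lemma beta1_le_beta2 tau phi : pre_subbase tau phi ->
  beta1 phi <= beta2 tau.
Proof.
move=> [pf [_ [_ hnb]]]; apply: Inf01_ge; first exact: Inf01_le1.
move=> _ [S hu <-]; apply: Gamma_le_univ => // x A nevA.
apply: le_trans (hnb x A) _.
apply: Sup01_le; first exact: Sup01_ge0.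
move=> _ [B [Bx BA] <-].
apply: Sup01_le; first exact: Sup01_ge0.
move=> r [n [Bs [hB ->]]].
have [i nev] : exists i, ~ eventually_in S (Bs i).
  apply: contrapT => hn; apply: nevA.
  apply: (@ev_S _ _ _ _ BA); rewrite -hB; apply: ev_ord => i.
  by apply: contrapT => hi; apply: hn; exists i.
have evc : eventually_in S (~` Bs i) by case: (hu (Bs i)).
apply: le_trans (bigmin_le _ i _) _.
apply: Sup01_ub; first by move=> _ [C _ <-]; case/andP: (pf C).
exists (Bs i) => //; split => //.
by move: Bx; rewrite -hB => /(_ i I).
Qed.

Lemma preconv_le_preaccum tau T S x : subnet T S ->
  preconv tau T x <= preaccum tau S x.
Proof.
move=> hs; apply: Inf01_ge; first exact: Inf01_le1.
move=> _ [A hA <-]; apply: Inf01_lb.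
  by move=> _ [C _ <-]; have := @prenbhd_le1 _ _ tau x C; lra.
by exists A => //; exact: (@subnet_notev _ _ _ _ hs hA).
Qed.

Lemma beta3_le_beta4 tau : beta3 tau <= beta4 tau.
Proof.
apply: Inf01_ge; first exact: Inf01_le1.
move=> _ [S _ <-]; apply: le_trans (_ : beta3 tau <=
  Sup01 [set Sup01 [set preconv tau T x | T in [set T | subnet T S]] | x in setT]) _.
  apply: Inf01_lb; last by exists S.
  by move=> _ [S' _ <-]; exact: Sup01_ge0.
apply: Sup01_le; first exact: Sup01_ge0.
move=> _ [x _ <-].
apply: (@le_trans _ _ (preaccum tau S x)).
  apply: Sup01_le; first by apply: Inf01_ge0 => _ [A _ <-]; have := @prenbhd_le1 _ _ tau x A; lra.
  by move=> _ [T hT <-]; apply: preconv_le_preaccum.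
apply: Sup01_ub; last by exists x.
by move=> _ [y _ <-]; exact: Inf01_le1.
Qed.

Lemma beta2_le_beta3 tau : beta2 tau <= beta3 tau.
Proof.
apply: Inf01_ge; first exact: Inf01_le1.
move=> _ [S _ <-].
have [T [hs hu]] := @universal_subnet _ S.
apply: (@le_trans _ _ (Sup01 [set preconv tau T x | x in setT])).
  apply: Inf01_lb; last by exists T.
  by move=> _ [S' _ <-]; exact: Sup01_ge0.
apply: Sup01_le; first exact: Sup01_ge0.
move=> _ [x _ <-].
apply: (@le_trans _ _ (Sup01 [set preconv tau T' x | T' in [set T' | subnet T' S]])).
  apply: Sup01_ub; last by exists T.
  by move=> _ [T' _ <-]; exact: Inf01_le1.
apply: Sup01_ub; last by exists x.
move=> _ [y _ <-]; apply: Sup01_le1 => _ [T' _ <-]; exact: Inf01_le1.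
Qed.

End Main.

Section Main2.
Variable R : realType.
Variable X : Type.
Implicit Types (S T : Net X) (A B : set X) (Re P rho tau : set X -> R).

Lemma minr_r (a b : R) : Num.min a b <= b.
Proof. by case: (lerP a b) => h; lra. Qed.

Lemma beta4_le_Gamma tau : beta4 tau <= GammaP tau.
Proof.
apply: Inf01_ge; first exact: Inf01_le1.
move=> _ [Re ReF <-]; rewrite /compact_term.
have s0 := @sterm_ge0 _ _ Re.
move: s0.
set s := Sup01 _ => s0.
have K1 := @Kdeg_le1 _ _ Re.
have I1 := @fincl_le1 _ _ Re (preopen tau).
have b1 : beta4 tau <= 1 by exact: Inf01_le1.
move: K1 I1; set K := Kdeg Re; set I := fincl Re (preopen tau) => K1 I1.
case: (lerP (Num.max 0 (K + I - 1)) s) => hms.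
  rewrite le_min b1 /=; lra.
have hm : s < K + I - 1.
  by move: hms; case: (lerP 0 (K + I - 1)) => h; lra.
suff : beta4 tau <= 2 - K - I.
  move=> h; rewrite le_min b1 /=; case: (lerP 0 (K + I - 1)) => h'; lra.
apply/ler_addgt0Pr => e e0.
pose r := (s + K) / 2.
have sr : s < r by rewrite /r; lra.
have rK : r < K by rewrite /r; lra.
pose r' := Num.max r (K - e).
have rr' : r <= r' by rewrite /r' le_max lexx.
have r'K : r' < K by rewrite /r'; case: (lerP r (K - e)) => h; lra.
have Ke : K - e <= r' by rewrite /r' le_max lexx orbT.
have cover : forall F : set (set X), finite_set F -> F `<=` [set B | r < Re B] ->
    exists x, forall B, F B -> ~ B x.
  move=> F fF sF; apply: contrapT => hn.
  have hall : forall x, exists2 B, F B & B x.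
    move=> x; apply: contrapT => hx; apply: hn; exists x => B FB Bx.
    by apply: hx; exists B.
  pose P B := if pselect (F B) then Re B else 0.
  have PF : fuzzy P.
    move=> B; rewrite /P; case: pselect => h /=; [exact: ReF|by rewrite lexx ler01].
  have PRe : fle P Re.
    move=> B; rewrite /P; case: pselect => h /=; first by rewrite lexx.
    by move: (ReF B) => /andP[].
  have KP : r <= Kdeg P.
    apply: Inf01_ge; first lra.
    move=> _ [x _ <-]; have [B FB Bx] := hall x.
    apply: (@le_trans _ _ (P B)).
      by rewrite /P; case: pselect => h /=; [apply/ltW/sF|].
    apply: Sup01_ub; last by exists B.
    by move=> _ [C _ <-]; move: (PF C) => /andP[].
  have FFP : 1 <= FF P.
    rewrite /FF.
    suff : Inf01 [set d | 0 <= d <= 1 /\ finite_set [set B | d < P B]] <= 0 by lra.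
    apply: Inf01_lb; first by move=> d [/andP[]].
    split; first by rewrite lexx ler01.
    apply: sub_finite_set fF => B /=; rewrite /P; case: pselect => //= h.
    by rewrite ltxx.
  have : Num.max 0 (Kdeg P + FF P - 1) <= s.
    apply: Sup01_ub; last by exists P.
    move=> _ [Q _ <-]; rewrite ge_max ler01 /=.
    have := @Kdeg_le1 _ _ Q; have := @FF_le1 _ _ Q; lra.
  rewrite ge_max => /andP[_]; lra.
have [S hS] := @cover_net X [set B | r < Re B] cover.
apply: (@le_trans _ _ (Sup01 [set preaccum tau S x | x in setT])).
  apply: Inf01_lb; last by exists S.
  by move=> _ [S' _ <-]; exact: Sup01_ge0.
apply: Sup01_le; first lra.
move=> _ [x _ <-].
have hx : r' < Sup01 [set Re B | B in [set B | B x]].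
  apply: lt_le_trans r'K _.
  apply: Inf01_lb; last by exists x.
  by move=> _ [y _ <-]; exact: Sup01_ge0.
have r'0 : 0 <= r' by lra.
have [_ [B Bx <-] hB] := @Sup01_gt _ _ r' r'0 hx.
have evB := hS B (lt_le_trans (le_lt_trans rr' hB) (lexx _)).
have h1 : preaccum tau S x <= 1 - prenbhd tau x B.
  apply: Inf01_lb.
    by move=> _ [C _ <-]; have := @prenbhd_le1 _ _ tau x C; lra.
  by exists B => //; apply: ev_notfreq.
have h2 : preopen tau B <= prenbhd tau x B.
  apply: Sup01_ub; last by exists B => //; split.
  by move=> _ [C _ <-]; exact: preopen_le1.
have h3 : I <= 1 - Re B + preopen tau B.
  apply: le_trans (minr_r 1 _).
  apply: Inf01_lb; last by exists B.
  move=> _ [C _ <-]; rewrite le_min ler01 /=.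
  have := @preopen_ge0 _ _ tau C; move: (ReF C) => /andP[? ?]; lra.
lra.
Qed.

End Main2.

Section B5.
Variable R : realType.
Variable X : Type.
Implicit Types (S T : Net X) (A B : set X) (Re P Q rho tau : set X -> R).

Definition Rc Re : set X -> R := fun A => Re (~` A).

Lemma RcK Re : Rc (Rc Re) = Re.
Proof. by apply/funext => A; rewrite /Rc setCK. Qed.

Definition gx Re (x : X) := Sup01 [set Re A | A in [set A | ~ A x]].

Lemma L1 Re x : Sup01 [set Rc Re B | B in [set B | B x]] = gx Re x.
Proof.
rewrite /gx; congr Sup01; apply/seteqP; split => y /=.
  by move=> [B Bx <-]; exists (~` B) => //=; apply.
move=> [A nAx <-]; exists (~` A); first exact: nAx.
by rewrite /Rc setCK.
Qed.

Lemma L2 Re x : Inf01 [set 1 - Re A | A in [set A | ~ A x]] = 1 - gx Re x.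
Proof.
rewrite /Inf01 /gx; congr (_ - Sup01 _); apply/seteqP; split => y /=.
  by move=> [_ [A hA <-] <-]; exists A => //; lra.
by move=> [A hA <-]; exists (1 - Re A); [exists A|lra].
Qed.

Lemma L3 Re : Kdeg (Rc Re) =
  1 - Sup01 [set Inf01 [set 1 - Re A | A in [set A | ~ A x]] | x in setT].
Proof.
rewrite /Kdeg /Inf01; congr (_ - Sup01 _); apply/seteqP; split => y /=.
  move=> [_ [x _ <-] <-]; exists x => //.
  by rewrite L1 -/(Inf01 _) L2.
move=> [x _ <-]; exists (Sup01 [set Rc Re B | B in [set B | B x]]); first by exists x.
by rewrite L1 -/(Inf01 _) L2.
Qed.

Lemma finite_Rc P (d : R) : finite_set [set B | d < P B] ->
  finite_set [set B | d < Rc P B].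
Proof.
move=> /(finite_image setC); apply: sub_finite_set => B /= h.
by exists (~` B) => //; rewrite setCK.
Qed.

Lemma L4 P : FF (Rc P) = FF P.
Proof.
rewrite /FF; congr (_ - Inf01 _); apply/seteqP; split => d /= [h1 h2]; split => //.
  by move: (@finite_Rc (Rc P) d h2); rewrite RcK.
exact: (@finite_Rc P d h2).
Qed.

Lemma L5 Re tau : fincl (Rc Re) (preopen tau) = fincl Re (preclosed tau).
Proof.
rewrite /fincl; congr Inf01; apply/seteqP; split => y /=.
  by move=> [B _ <-]; exists (~` B) => //; rewrite /preclosed setCK.
by move=> [B _ <-]; exists (~` B) => //; rewrite /Rc setCK.
Qed.

Lemma L6 Re : fuzzy Re -> fI Re = 1 - Sup01 [set Num.max 0 (Kdeg Q + FF Q - 1)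
            | Q in [set Q | fuzzy Q /\ fle Q (Rc Re)]].
Proof.
move=> ReF; rewrite /fI /Inf01; congr (_ - Sup01 _); apply/seteqP; split => y /=.
  move=> [_ [P [PF PRe] <-] <-]; exists (Rc P).
    by split; [move=> B; exact: PF|move=> B; exact: PRe].
  rewrite L4 L3 -/(Inf01 _).
  set Y := Sup01 _.
  case: (lerP 0 (1 - Y + FF P - 1)) => h1; case: (lerP 1 (1 - FF P + Y)) => h2; lra.
move=> [Q [QF QRe] <-]; exists (Num.min 1 (1 - FF (Rc Q) +
      Sup01 [set Inf01 [set 1 - Rc Q B | B in [set B | ~ B x]] | x in setT])).
  exists (Rc Q) => //; split; first by move=> B; exact: QF.
  by move=> B; have := QRe (~` B); rewrite /Rc setCK.
have := L3 (Rc Q); rewrite RcK => ->; rewrite L4.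
set Y := Sup01 _.
case: (lerP 0 (1 - Y + FF Q - 1)) => h1; case: (lerP 1 (1 - FF Q + Y)) => h2; lra.
Qed.

Lemma Rc_fuzzy Re : fuzzy Re -> fuzzy (Rc Re).
Proof. by move=> h B; exact: h. Qed.

Lemma L7 tau Re : fuzzy Re -> compact_term (preopen tau) (Rc Re) =
  Num.min 1 (1 - Num.max 0 (fincl Re (preclosed tau) + fI Re - 1) +
            Sup01 [set Inf01 [set 1 - Re A | A in [set A | ~ A x]] | x in setT]).
Proof.
move=> ReF; rewrite /compact_term L3 L5 (@L6 Re ReF).
have := @Sup01_ge0 _ [set Inf01 [set 1 - Re A | A in [set A | ~ A x]] | x in setT].
have := @Sup01_ge0 _ [set Num.max 0 (Kdeg Q + FF Q - 1)
            | Q in [set Q | fuzzy Q /\ fle Q (Rc Re)]].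
move: (Sup01 [set Inf01 _ | x in setT]) => x5.
move: (Sup01 [set Num.max 0 _ | Q in _]) => s'.
move: (fincl Re (preclosed tau)) => a h1 h2.
case: (lerP 0 (1 - x5 + a - 1)) => c1; case: (lerP 0 (a + (1 - s') - 1)) => c2;
  case: (lerP 1 (1 - (1 - x5 + a - 1) + s')) => c3; case: (lerP 1 (1 - 0 + s')) => c4;
  case: (lerP 1 (1 - (a + (1 - s') - 1) + x5)) => c5; case: (lerP 1 (1 - 0 + x5)) => c6;
  lra.
Qed.

Lemma Gamma_eq_beta5 tau : GammaP tau = beta5 tau.
Proof.
rewrite /GammaP /Gamma_rho /beta5; congr Inf01; apply/seteqP; split => y /=.
  move=> [Re' ReF' <-]; exists (Rc Re'); first exact: Rc_fuzzy.
  by rewrite -L7 ?RcK //; exact: Rc_fuzzy.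
move=> [Re ReF <-]; exists (Rc Re); first exact: Rc_fuzzy.
exact: L7.
Qed.

End B5.
Theorem theorem3p1 (R : realType) (X : Type) (tau : set X -> R) (phiP : set X -> R) :
  fuzzifying_topology tau -> pre_subbase tau phiP ->
  GammaP tau = beta1 phiP /\ GammaP tau = beta2 tau /\ GammaP tau = beta3 tau /\
  GammaP tau = beta4 tau /\ GammaP tau = beta5 tau.
Proof.
move=> _ hps.
have h1 := @Gamma_le_beta1 _ _ tau phiP hps.
have h2 := @beta1_le_beta2 _ _ tau phiP hps.
have h3 := @beta2_le_beta3 _ _ tau.
have h4 := @beta3_le_beta4 _ _ tau.
have h5 := @beta4_le_Gamma _ _ tau.
have h5' := @Gamma_eq_beta5 _ _ tau.
move: h1 h2 h3 h4 h5 h5'.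
move: (GammaP tau) (beta1 phiP) (beta2 tau) (beta3 tau) (beta4 tau) (beta5 tau).
move=> g b1 b2 b3 b4 b5 h1 h2 h3 h4 h5 e5.
have E : forall a b : R, a <= b -> b <= a -> a = b.
  by move=> a b hab hba; apply/le_anti/andP.
split; first by apply: E; lra.
split; first by apply: E; lra.
split; first by apply: E; lra.
split => //; apply: E; lra.
Qed.
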